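(* Let $N$ be a lattice, $M=\operatorname{Hom}(N,\mathbb{Z})$, $\sigma\subset N_{\mathbb{R}}$ a full-dimensional strongly convex rational polyhedral cone with primitive generators $\vec v_1,\dots,\vec v_r$, and let $a_1,\dots,a_r\ge0$ be rational numbers (the coefficients of an effective torus-invariant $\mathbb{Q}$-divisor $D=\sum a_iD_i$). Let $$P'=\{\vec v\in M_{\mathbb{R}}:\ \vec v\cdot\vec v_i\ge0\ \forall i,\text{ and for every }\vec k\in M\setminus\sigma^\vee\text{ there is }i\text{ with }(\vec v+\vec k)\cdot\vec v_i<-a_i\}.$$ Then $P'=P_\sigma^D:=\{\vec v\in M_{\mathbb{R}}:0\le\vec v\cdot\vec v_i<1-a_i\ \forall i\}$.
   Context: $\sigma^\vee=\{\vec u\in M_{\mathbb{R}}:\vec u\cdot\vec v\ge0\ \forall\vec v\in\sigma\}$. *)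

(* Defs.v *)
From HB Require Import structures.
From mathcomp Require Import all_boot all_order all_algebra.
From mathcomp Require Import reals.
Set Implicit Arguments. Unset Strict Implicit. Unset Printing Implicit Defensive.
Import Order.TTheory GRing.Theory Num.Theory.
Local Open Scope ring_scope.

(* N = Z^n, M = Hom(N,Z) = Z^n via the standard dot-product pairing;
   N_R = M_R = R^n, represented as row vectors. *)

Definition dot (R : nzRingType) (n : nat) (u v : 'rV[R]_n) : R :=
  \sum_(j < n) u 0 j * v 0 j.

Definition realize (R : nzRingType) (n : nat) (w : 'rV[int]_n) : 'rV[R]_n :=
  map_mx (fun z : int => z%:~R) w.

Definition primitive (n : nat) (w : 'rV[int]_n) : Prop :=
  forall d : int, (forall j, (d %| w ord0 j)%Z) -> d = 1 \/ d = -1.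

Definition cone (R : realFieldType) (n r : nat) (v : 'I_r -> 'rV[R]_n)
  (x : 'rV[R]_n) : Prop :=
  exists lam : 'I_r -> R, (forall i, 0 <= lam i) /\ x = \sum_(i < r) lam i *: v i.

Definition dual_cone (R : realFieldType) (n : nat) (S : 'rV[R]_n -> Prop)
  (u : 'rV[R]_n) : Prop :=
  forall w, S w -> 0 <= dot u w.

Definition strongly_convex (R : realFieldType) (n : nat) (S : 'rV[R]_n -> Prop)
  : Prop := forall x, S x -> S (- x) -> x = 0.

Definition full_dimensional (R : realFieldType) (n : nat) (S : 'rV[R]_n -> Prop)
  : Prop := forall x, exists y z, S y /\ S z /\ x = y - z.

(* the v_i are an irredundant generating family: no v_i lies in the cone
   generated by the others (so, for a strongly convex cone, they span
   pairwise distinct extremal rays) *)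
Definition irredundant (R : realFieldType) (n r : nat) (v : 'I_r -> 'rV[R]_n)
  : Prop :=
  forall i (lam : 'I_r -> R), (forall j, 0 <= lam j) -> lam i = 0 ->
    v i <> \sum_(j < r) lam j *: v j.

(* Main.v *)
Require Import Defs.
From HB Require Import structures.
From mathcomp Require Import all_boot all_order all_algebra.
From mathcomp Require Import reals ring lra.
Import Order.TTheory GRing.Theory Num.Theory.
Local Open Scope ring_scope.


Section Dot.
Variables (F : comNzRingType) (n : nat).
Implicit Types (u v w : 'rV[F]_n).
Lemma dotC u v : dot u v = dot v u.
Proof. by apply: eq_bigr => j _; rewrite mulrC. Qed.
Lemma dotDl u v w : dot (u + v) w = dot u w + dot v w.
Proof. by rewrite /dot -big_split; apply: eq_bigr => j _; rewrite mxE mulrDl. Qed.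
Lemma dotZl a u w : dot (a *: u) w = a * dot u w.
Proof. by rewrite /dot mulr_sumr; apply: eq_bigr => j _; rewrite mxE mulrA. Qed.
Lemma dotNl u w : dot (- u) w = - dot u w.
Proof. by rewrite -scaleN1r dotZl mulN1r. Qed.
Lemma dotBl u v w : dot (u - v) w = dot u w - dot v w.
Proof. by rewrite dotDl dotNl. Qed.
Lemma dot0l w : dot 0 w = 0.
Proof. by rewrite /dot big1 // => j _; rewrite mxE mul0r. Qed.
Lemma dotDr u v w : dot w (u + v) = dot w u + dot w v.
Proof. by rewrite !(dotC w) dotDl. Qed.
Lemma dotZr a u w : dot w (a *: u) = a * dot w u.
Proof. by rewrite !(dotC w) dotZl. Qed.
Lemma dotNr u w : dot w (- u) = - dot w u.
Proof. by rewrite !(dotC w) dotNl. Qed.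
Lemma dotBr u v w : dot w (u - v) = dot w u - dot w v.
Proof. by rewrite !(dotC w) dotBl. Qed.
Lemma dot0r w : dot w 0 = 0.
Proof. by rewrite dotC dot0l. Qed.
End Dot.
Arguments dotC {F n}. Arguments dotDl {F n}. Arguments dotZl {F n}. Arguments dotNl {F n}. Arguments dotBl {F n}. Arguments dot0l {F n}.
Arguments dotDr {F n}. Arguments dotZr {F n}. Arguments dotNr {F n}. Arguments dotBr {F n}. Arguments dot0r {F n}.

Section Farkas.
Variables (F : realFieldType) (n : nat).

Fixpoint incone (s : seq 'rV[F]_n) (b : 'rV[F]_n) : Prop :=
  match s with
  | [::] => b = 0
  | u :: t => exists mu, 0 <= mu /\ incone t (b - mu *: u)
  end.

Lemma msg0 (x : F) : 0 <= x * x. Proof. by rewrite -expr2 sqr_ge0. Qed.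

Lemma incone_weak u t b : incone t b -> incone (u :: t) b.
Proof. by move=> h; exists 0; rewrite scale0r subr0. Qed.

Lemma proj_lemma (y u : 'rV[F]_n) (c : F) t :
  (forall w, w \in t -> 0 <= dot y w) -> forall z,
  incone (map (fun w => w - (dot y w / c) *: u) t) z ->
  exists z0, incone t z0 /\ 0 <= dot y z0 /\ z = z0 - (dot y z0 / c) *: u.
Proof.
elim: t => [|w t IH] Hy z /=.
  by move=> ->; exists 0; rewrite dot0r mul0r scale0r subr0 lexx.
move=> [mu [Hmu Hz]].
have Hy' : forall w, w \in t -> 0 <= dot y w.
  by move=> w' hw; apply: Hy; rewrite inE hw orbT.
have [z1 [Hz1 [Hyz1 E]]] := IH Hy' _ Hz.
have Hyw : 0 <= dot y w by apply: Hy; rewrite inE eqxx.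
exists (z1 + mu *: w); split; [|split].
- by exists mu; split => //; rewrite addrK.
- by rewrite dotDr dotZr addr_ge0 // mulr_ge0.
- have -> : z = (z - mu *: (w - (dot y w / c) *: u)) + mu *: (w - (dot y w / c) *: u) by rewrite subrK.
  rewrite E dotDr dotZr; apply/rowP => k; rewrite !mxE; ring.
Qed.

Lemma farkas (s : seq 'rV[F]_n) (b : 'rV[F]_n) :
  ~ incone s b -> exists y, (forall w, w \in s -> 0 <= dot y w) /\ dot y b < 0.
Proof.
have [m] := ubnP (size s); elim: m s b => // m IH [|u t] b /= Hsz Hb.
  exists (- b); split => // .
  rewrite dotNl oppr_lt0 lt_def; apply/andP; split; last first.
    by apply: sumr_ge0 => j _; apply: msg0.
  apply/negP => /eqP h; apply: Hb; apply/rowP => j; rewrite mxE.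
  have := @psumr_eq0P F _ xpredT (fun j => b 0 j * b 0 j) (fun j _ => msg0 (b 0 j)) h j isT.
  by move/eqP; rewrite mulf_eq0 orbb => /eqP.
have Ht : ~ incone t b by move=> h; apply: Hb; apply: incone_weak.
have [y [Hy Hyb]] := IH t b Hsz Ht.
case: (lerP 0 (dot y u)) => Hyu.
  exists y; split => // w; rewrite inE => /predU1P [-> //|]; exact: Hy.
set c := dot y u in Hyu.
pose pr w := w - (dot y w / c) *: u.
have Hb' : ~ incone (map pr t) (pr b).
  move=> /(@proj_lemma y u c t Hy) [z0 [Hz0 [Hyz0 E]]]; apply: Hb.
  exists ((dot y b - dot y z0) / c); split.
    rewrite -mulrNN -invrN; apply: mulr_ge0; last by rewrite invr_ge0; lra.
    lra.
  suff -> : b - (dot y b - dot y z0) / c *: u = z0 by [].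
  have : b - (dot y b / c) *: u = z0 - (dot y z0 / c) *: u by [].
  move/rowP => h; apply/rowP => k; have := h k; rewrite !mxE => h'.
  have -> : b 0 k = z0 0 k - dot y z0 / c * u 0 k + dot y b / c * u 0 k.
    by rewrite -h'; ring.
  ring.
have Hsz' : (size (map pr t) < m)%N by rewrite size_map.
have [z [Hz Hzb]] := IH _ (pr b) Hsz' Hb'.
have cn0 : c != 0 by rewrite lt_eqF.
have key : forall w, dot (z - (dot z u / c) *: y) w = dot z (pr w).
  move=> w; rewrite /pr dotBl dotBr !dotZl !dotZr (dotC y w).
  ring.
exists (z - (dot z u / c) *: y); split; last by rewrite key.
move=> w; rewrite inE => /predU1P [->|hw].
  rewrite dotBl dotZl -/c.
  have -> : dot z u / c * c = dot z u by rewrite divfK.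
  by rewrite subrr.
rewrite key; apply: Hz; exact: map_f.
Qed.
End Farkas.
Arguments incone {F n}. Arguments farkas {F n}.


Lemma incone_map (F : realFieldType) (n r : nat) (g : 'I_r -> 'rV[F]_n)
  (s : seq 'I_r) (b : 'rV[F]_n) :
  incone (map g s) b -> exists lam : 'I_r -> F, (forall l, 0 <= lam l) /\
    (forall l, l \notin s -> lam l = 0) /\ b = \sum_l lam l *: g l.
Proof.
elim: s b => [|l0 s IH] b /=.
  move=> ->; exists (fun _ => 0); split => //; split => //.
  by rewrite big1 // => l _; rewrite scale0r.
move=> [mu [Hmu /IH [lam [H1 [H2 H3]]]]].
exists (fun l => lam l + (l == l0)%:R * mu); split; [|split].
- by move=> l; rewrite addr_ge0 // mulr_ge0 // ler0n.
- move=> l; rewrite inE negb_or => /andP [/negbTE -> /H2 ->].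
  by rewrite mul0r addr0.
- under eq_bigr do rewrite scalerDl.
  rewrite big_split /= -H3 (bigD1 l0) //= eqxx mul1r big1 ?addr0 ?subrK //.
  by move=> l /negbTE ->; rewrite mul0r scale0r.
Qed.

Lemma sum_delta (F : nzRingType) (n r : nat) (g : 'I_r -> 'rV[F]_n) j (c : F) :
  \sum_l ((l == j)%:R * c) *: g l = c *: g j.
Proof.
rewrite (bigD1 j) //= eqxx mul1r big1 ?addr0 //.
by move=> l /negbTE ->; rewrite mul0r scale0r.
Qed.

Lemma dot_realize (F : numDomainType) (n : nat) (k w : 'rV[int]_n) :
  dot (realize F k) (realize F w) = (dot k w)%:~R.
Proof.
rewrite /dot rmorph_sum; apply: eq_bigr => j _; rewrite !mxE.
by rewrite rmorphM.
Qed.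

Lemma rr_comb (R : numFieldType) (n r : nat) (v : 'I_r -> 'rV[int]_n)
   (c : 'I_r -> rat) :
  map_mx ratr (\sum_l c l *: realize rat (v l)) =
  \sum_l ratr (c l) *: realize R (v l).
Proof.
apply/rowP => k; rewrite !mxE !summxE rmorph_sum; apply: eq_bigr => l _.
rewrite !mxE; transitivity (ratr (c l) * (ratr ((v l 0 k)%:~R : rat) : R)); first exact: (fst (ratr_is_multiplicative R)).
by rewrite ratr_int.
Qed.

Lemma bezout_vec (n : nat) (f : 'I_n -> int) :
  exists c : 'I_n -> int, forall j, (\sum_l c l * f l %| f j)%Z.
Proof.
elim: n f => [|n IH] f; first by exists (fun _ => 0) => -[].
have [c' Hc'] := IH (fun l => f (lift ord0 l)).
set g' := \sum_l c' l * f (lift ord0 l) in Hc'.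
have [u [w E]] := Bezoutz (f ord0) g'.
exists (fun l => if unlift ord0 l is Some l' then w * c' l' else u).
rewrite big_ord_recl /=.
have -> : \sum_(i < n) (if unlift ord0 (lift ord0 i) is Some l' then w * c' l' else u) * f (lift ord0 i) = w * g'.
  rewrite /g' mulr_sumr; apply: eq_bigr => i _; rewrite liftK mulrA //.
rewrite unlift_none E => j; case: (unliftP ord0 j) => [j'|] ->.
  exact: dvdz_trans (dvdz_gcdr _ _) (Hc' j').
exact: dvdz_gcdl.
Qed.

Lemma clear_den (n : nat) (Y : 'rV[rat]_n) :
  exists W : 'rV[int]_n, exists D : rat, 0 < D /\ realize rat W = D *: Y.
Proof.
exists (\row_j (numq (Y 0 j) * \prod_(l | l != j) denq (Y 0 l))).
exists (\prod_l denq (Y 0 l))%:~R; split.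
  by rewrite ltr0z prodr_gt0 // => l _; rewrite denq_gt0.
apply/rowP => j; rewrite !mxE [in RHS](bigD1 j) //= !intrM numqE; ring.
Qed.


Lemma rr_v (R : numFieldType) (n : nat) (w : 'rV[int]_n) :
  map_mx (ratr : rat -> R) (realize rat w) = realize R w.
Proof. by apply/rowP => k; rewrite !mxE ratr_int. Qed.

Lemma rr_neg (R : numFieldType) (n : nat) (w : 'rV[rat]_n) :
  map_mx (ratr : rat -> R) (- w) = - map_mx ratr w.
Proof. by apply/rowP => k; rewrite !mxE raddfN. Qed.

Lemma dot_sumr (F : comNzRingType) (n r : nat) (u : 'rV[F]_n)
  (c : 'I_r -> F) (g : 'I_r -> 'rV[F]_n) :
  dot u (\sum_l c l *: g l) = \sum_l c l * dot u (g l).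
Proof.
rewrite /dot; under eq_bigr do rewrite summxE mulr_sumr.
rewrite exchange_big /=; apply: eq_bigr => l _; rewrite mulr_sumr.
by apply: eq_bigr => j _; rewrite mxE mulrCA.
Qed.

Lemma cone_gen (R : realType) n r (g : 'I_r -> 'rV[R]_n) i : cone g (g i).
Proof.
exists (fun l => (l == i)%:R * 1); split.
  by move=> l; rewrite mulr1 ler0n.
by rewrite sum_delta scale1r.
Qed.

Section Key.
Variables (R : realType) (n r : nat) (v : 'I_r -> 'rV[int]_n).
Hypothesis SC : strongly_convex (cone (fun i => realize R (v i))).
Hypothesis Pr : forall i, primitive (v i).
Hypothesis Irr : irredundant (fun i => realize R (v i)).

Let vq l := realize rat (v l).

Lemma stepA j i : i != j -> exists y : 'rV[rat]_n, dot y (vq j) = 0 /\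
  (forall l, 0 <= dot y (vq l)) /\ 0 < dot y (vq i).
Proof.
move=> ij.
set L := [seq l <- enum 'I_r | l != j].
have Hnot : ~ incone (vq j :: - vq j :: map vq L) (- vq i).
  move=> /= [al [Hal [be [Hbe /incone_map [lam [Hl0 [HlL E]]]]]]].
  have lj : lam j = 0 by apply: HlL; rewrite mem_filter eqxx.
  set ga := al - be.
  have E2 : - vq i = \sum_l lam l *: vq l + ga *: vq j.
    rewrite -E /ga; apply/rowP => k; rewrite !mxE; ring.
  case: (lerP 0 ga) => hg.
    have E3 : - vq i = \sum_l (lam l + (l == j)%:R * ga) *: vq l.
      under eq_bigr do rewrite scalerDl.
      by rewrite big_split /= sum_delta.
    have C1 : cone (fun l => realize R (v l)) (- realize R (v i)).
      exists (fun l => ratr (lam l + (l == j)%:R * ga)); split.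
        by move=> l; rewrite ler0q addr_ge0 // mulr_ge0 // ler0n.
      by rewrite -rr_comb -E3 rr_neg rr_v.
    have := SC _ (@cone_gen R n r (fun l => realize R (v l)) i) C1 => /rowP Hz.
    have [] := Pr i 2 => [jj|//|//].
    have := Hz jj; rewrite !mxE => /eqP; rewrite intr_eq0 => /eqP.
    by rewrite (ord1 ord0) => ->; rewrite dvdz0.
  pose mu l := (lam l + (l == i)%:R * 1) / (- ga).
  have gn0 : ga != 0 by rewrite lt_eqF.
  have E4 : vq j = \sum_l mu l *: vq l.
    under eq_bigr do rewrite /mu mulrC -scalerA.
    rewrite -scaler_sumr.
    under eq_bigr do rewrite scalerDl.
    rewrite big_split /= sum_delta.
    have -> : \sum_l lam l *: vq l = - vq i - ga *: vq j.
      by rewrite E2; apply/rowP => k; rewrite !mxE; ring.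
    apply/rowP => k; rewrite !mxE; field.
    exact: gn0.
  apply: (Irr j (fun l => ratr (mu l))).
  - move=> l; rewrite ler0q /mu divr_ge0 //; last lra.
    by rewrite addr_ge0 // mulr_ge0 // ler0n.
  - by rewrite /mu lj eq_sym (negbTE ij) mulr1 add0r mul0r rmorph0.
  - by rewrite -rr_comb -E4 rr_v.
have [y [Hy Hyb]] := farkas _ _ Hnot.
have h1 : 0 <= dot y (vq j) by apply: Hy; rewrite inE eqxx.
have h2 : 0 <= dot y (- vq j) by apply: Hy; rewrite !inE eqxx orbT.
rewrite dotNr oppr_ge0 in h2.
have hj : dot y (vq j) = 0 by apply/le_anti; rewrite h2 h1 //.
exists y; split => //; split; last by rewrite dotNr oppr_lt0 in Hyb.
move=> l; case: (eqVneq l j) => [->|lj]; first by rewrite hj.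
apply: Hy; rewrite !inE; apply/orP; right; apply/orP; right.
by apply: map_f; rewrite mem_filter lj mem_enum.
Qed.

Lemma stepB j (L : seq 'I_r) : j \notin L -> exists Y : 'rV[rat]_n,
  dot Y (vq j) = 0 /\ forall l, 0 <= dot Y (vq l) /\ (l \in L -> 0 < dot Y (vq l)).
Proof.
elim: L => [|i L IH] /=.
  by move=> _; exists 0; rewrite dot0l; split => // l; rewrite dot0l.
rewrite inE negb_or => /andP [ji /IH [Y [HYj HY]]].
have ij : i != j by rewrite eq_sym.
have [y [Hyj [Hy Hyi]]] := @stepA j i ij.
exists (Y + y); rewrite dotDl HYj Hyj addr0; split => // l.
have [h1 h2] := HY l; split; first by rewrite dotDl addr_ge0.
rewrite inE => /predU1P [->|/h2 h]; rewrite dotDl.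
  by rewrite ltr_wpDl // (HY i).1.
by rewrite ltr_wpDr.
Qed.

Lemma stepC j : exists k : 'rV[int]_n, dot k (v j) = -1 /\
  forall l, l != j -> 0 <= dot k (v l).
Proof.
have jL : j \notin [seq l <- enum 'I_r | l != j] by rewrite mem_filter eqxx.
have [Y [HYj HY]] := @stepB j _ jL.
have [W [D [HD HW]]] := @clear_den n Y.
have HWl l : (dot W (v l))%:~R = D * dot Y (vq l) :> rat.
  by rewrite -dot_realize HW dotZl.
have HWj : dot W (v j) = 0.
  by apply/eqP; rewrite -(intr_eq0 rat) HWl HYj mulr0.
have HWp l : l != j -> 0 < dot W (v l).
  move=> lj; rewrite -(ltr0z rat) HWl pmulr_rgt0 //.
  by apply: (HY l).2; rewrite mem_filter lj mem_enum.
have [c Hc] := @bezout_vec n (fun l => v j ord0 l).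
set g := \sum_l c l * v j ord0 l in Hc.
have gg : g * g = 1 by case: (Pr j g Hc) => ->.
pose k0 := \row_l (- g * c l).
have Hk0 : dot k0 (v j) = -1.
  rewrite /dot.
  under eq_bigr do rewrite mxE -mulrA.
  by rewrite -mulr_sumr -/g mulNr gg.
pose N := \sum_l `|dot k0 (v l)|.
exists (k0 + N *: W); split.
  by rewrite dotDl dotZl HWj mulr0 addr0.
move=> l lj; rewrite dotDl dotZl.
have hN : `|dot k0 (v l)| <= N.
  rewrite /N (bigD1 l) //= lerDl; exact: sumr_ge0.
have h1 : 1 <= dot W (v l) by apply: HWp.
have hN0 : 0 <= N by exact: sumr_ge0.
have h3 : N <= N * dot W (v l).
  have : 0 <= N * (dot W (v l) - 1) by rewrite mulr_ge0 // subr_ge0.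
  by rewrite mulrBr mulr1 subr_ge0.
have h4 : - dot k0 (v l) <= `|dot k0 (v l)|.
  by rewrite -normrN ler_norm.
lra.
Qed.
End Key.


Theorem lemma4p20 (R : realType) (n r : nat) (v : 'I_r -> 'rV[int]_n)
  (a : 'I_r -> rat) :
  strongly_convex (cone (fun i => realize R (v i))) ->
  full_dimensional (cone (fun i => realize R (v i))) ->
  (forall i, primitive (v i)) ->
  irredundant (fun i => realize R (v i)) ->
  (forall i, 0 <= a i) ->
  forall x : 'rV[R]_n,
    ((forall i, 0 <= dot x (realize R (v i))) /\
     (forall k : 'rV[int]_n,
        ~ dual_cone (cone (fun i => realize R (v i))) (realize R k) ->
        exists i, dot (x + realize R k) (realize R (v i)) < - ratr (a i)))
    <->
    (forall i, 0 <= dot x (realize R (v i)) < 1 - ratr (a i)).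
Proof.
move=> SC _ Pr Irr Ha x; split.
  move=> [H1 H2] i; rewrite H1 /=.
  case: (ltrP (dot x (realize R (v i))) (1 - ratr (a i))) => // hge.
  exfalso.
  have [k [Hki Hkl]] := @stepC R n r v SC Pr Irr i.
  have Hnd : ~ dual_cone (cone (fun i => realize R (v i))) (realize R k).
    move=> Hd; have := Hd _ (@cone_gen R n r (fun l => realize R (v l)) i).
    by rewrite dot_realize ler0z Hki.
  have [l Hl] := H2 k Hnd.
  rewrite dotDl dot_realize in Hl.
  case: (eqVneq l i) => [li|li].
    rewrite li Hki intrN in Hl; lra.
  have h1 := H1 l; have h2 : (0 : R) <= (dot k (v l))%:~R by rewrite ler0z Hkl.
  have h3 : (0 : R) <= ratr (a l) by rewrite ler0q.
  lra.
move=> H; split; first by move=> i; case/andP: (H i).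
move=> k Hk.
case: (boolP [exists i, dot k (v i) < 0]) => [/existsP [i hi]|/existsPn hno].
  exists i; rewrite dotDl dot_realize.
  have hi' : dot k (v i) <= -1 by [].
  have : ((dot k (v i))%:~R : R) <= (-1 : int)%:~R by rewrite ler_int.
  rewrite intrN => h; case/andP: (H i) => h1 h2; lra.
exfalso; apply: Hk => w [lam [hl ->]].
rewrite dot_sumr; apply: sumr_ge0 => l _; apply: mulr_ge0 => //.
by rewrite dot_realize ler0z leNgt hno.
Qed.
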